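(* For all $n,m,l\in\mathbb{N}_0$ with $l\le n$ and $l\le m$, and all $x,y\in[0,1]$, $$\frac{1}{\bigl([x]_q+[1-x]_q\bigr)^{n-l}\bigl([y]_q+[1-y]_q\bigr)^{m-l}}\sum_{k=l}^{n}\sum_{j=l}^{m}\frac{\binom{k}{l}\binom{j}{l}}{\binom{n}{l}\binom{m}{l}}B_{k,j;n,m}(x,y;q)$$ $$=\sum_{k=0}^{l}\sum_{j=0}^{l}q^{\binom{k}{2}+\binom{j}{2}}\binom{x}{k}_q\binom{y}{j}_q[k]_q!\,[j]_q!\,S(l,k;q)\,S(l,j;q).$$
   Context: Fix $q\in(0,1)$. For real $x$ put $[x]_q=\frac{1-q^x}{1-q}$. For $k,j,n,m\in\mathbb{Z}$ and $x,y\in[0,1]$, the modified $q$-Bernstein polynomial of two variables is $B_{k,j;n,m}(x,y;q)=\binom{n}{k}\binom{m}{j}[x]_q^k[y]_q^j[1-x]_q^{n-k}[1-y]_q^{m-j}$ if $0\le k\le n$ and $0\le j\le m$, and $B_{k,j;n,m}(x,y;q)=0$ otherwise. For $k\in\mathbb{N}_0$, $[k]_q!=[1]_q[2]_q\cdots[k]_q$ with $[0]_q!=1$. For real $x$ and $k\in\mathbb{N}_0$, $\binom{x}{k}_q=\frac{[x]_q[x-1]_q\cdots[x-k+1]_q}{[k]_q!}$ (equal to $1$ for $k=0$); for integers $0\le i\le k$, $\binom{k}{i}_q=\frac{[k]_q!}{[i]_q![k-i]_q!}$. The $q$-Stirling numbers of the second kind are $S(n,k;q)=\frac{q^{-\binom{k}{2}}}{[k]_q!}\sum_{i=0}^{k}(-1)^i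 q^{\binom{i}{2}}\binom{k}{i}_q[k-i]_q^{\,n}$ for $n,k\in\mathbb{N}_0$, with the convention $0^0=1$. *)

(* Defs.v *)
From Stdlib Require Import Reals Lra Lia Arith List.
Open Scope R_scope.

(* sum_{i=a}^{b} f i  (empty if b < a) *)
Definition rsum (a b : nat) (f : nat -> R) : R :=
  fold_right (fun i acc => f i + acc) 0 (List.seq a (S b - a)).

(* prod_{i=a}^{b} f i  (empty = 1 if b < a) *)
Definition rprod (a b : nat) (f : nat -> R) : R :=
  fold_right (fun i acc => f i * acc) 1 (List.seq a (S b - a)).

Definition qnum (q x : R) : R := (1 - Rpower q x) / (1 - q).

Definition qfact (q : R) (k : nat) : R := rprod 1 k (fun i => qnum q (INR i)).

Definition qbinR (q x : R) (k : nat) : R :=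
  fold_right (fun i acc => qnum q (x - INR i) * acc) 1 (List.seq 0 k) / qfact q k.

Definition qbin (q : R) (k i : nat) : R :=
  qfact q k / (qfact q i * qfact q (k - i)).

Definition bin2 (k : nat) : nat := (k * (k - 1) / 2)%nat.

(* q-Stirling numbers of the second kind; pow 0 0 = 1 in Stdlib *)
Definition qstir (q : R) (n k : nat) : R :=
  / q ^ (bin2 k) / qfact q k *
  rsum 0 k (fun i => (-1) ^ i * q ^ (bin2 i) * qbin q k i * (qnum q (INR (k - i))) ^ n).

Definition qBern (q : R) (k j n m : nat) (x y : R) : R :=
  if (Nat.leb k n && Nat.leb j m)%bool then
    C n k * C m j * qnum q x ^ k * qnum q y ^ j
      * qnum q (1 - x) ^ (n - k) * qnum q (1 - y) ^ (m - j)
  else 0.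

(* Main.v *)
Require Import Defs.
From Stdlib Require Import Reals Lra Lia Arith List.
Open Scope R_scope.

Lemma fr_sum_c (f : nat -> R) l c :
  fold_right (fun i acc => f i + acc) c l = fold_right (fun i acc => f i + acc) 0 l + c.
Proof. induction l; simpl; [ring | rewrite IHl; ring]. Qed.

Lemma fr_prod_c (f : nat -> R) l c :
  fold_right (fun i acc => f i * acc) c l = fold_right (fun i acc => f i * acc) 1 l * c.
Proof. induction l; simpl; [ring | rewrite IHl; ring]. Qed.

Lemma fr_map (g : nat -> R -> R) (h : nat -> nat) (c : R) (l : list nat) :
  fold_right g c (map h l) = fold_right (fun x => g (h x)) c l.
Proof. induction l; simpl; [reflexivity | now rewrite IHl]. Qed.

Lemma rsum_Sr a b f : (a <= S b)%nat -> rsum a (S b) f = rsum a b f + f (S b).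
Proof.
  intros H. unfold rsum.
  replace (S (S b) - a)%nat with (S (S b - a)) by lia. rewrite seq_S.
  replace (a + (S b - a))%nat with (S b) by lia. rewrite fold_right_app. simpl.
  rewrite fr_sum_c. ring.
Qed.

Lemma rsum_SS a b f : rsum (S a) (S b) f = rsum a b (fun i => f (S i)).
Proof.
  unfold rsum. replace (S (S b) - S a)%nat with (S b - a)%nat by lia.
  rewrite <- seq_shift. now rewrite fr_map.
Qed.

Lemma rsum_first a b f : (a <= b)%nat -> rsum a b f = f a + rsum (S a) b f.
Proof.
  intros H. unfold rsum. replace (S b - a)%nat with (S (b - a)) by lia.
  replace (S b - S a)%nat with (b - a)%nat by lia. reflexivity.
Qed.

Lemma rsum_0S b f : rsum 0 (S b) f = f 0%nat + rsum 0 b (fun i => f (S i)).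
Proof. rewrite rsum_first by lia. now rewrite rsum_SS. Qed.

Lemma rsum_nil a b f : (b < a)%nat -> rsum a b f = 0.
Proof. intros H. unfold rsum. replace (S b - a)%nat with 0%nat by lia. reflexivity. Qed.

Lemma rsum_ext a b f g : (forall i, (a <= i <= b)%nat -> f i = g i) -> rsum a b f = rsum a b g.
Proof.
  intros H. unfold rsum.
  assert (H' : forall i, In i (seq a (S b - a)) -> f i = g i).
  { intros i Hi. apply in_seq in Hi. apply H. lia. }
  revert H'. generalize (seq a (S b - a)). intros l Hl. induction l; simpl; [reflexivity|].
  rewrite Hl by (left; reflexivity). rewrite IHl; [reflexivity|]. intros; apply Hl; now right.
Qed.

Lemma rsum_plus a b f g : rsum a b (fun i => f i + g i) = rsum a b f + rsum a b g.
Proof. unfold rsum. generalize (seq a (S b - a)). intros l; induction l; simpl; [ring| rewrite IHl; ring]. Qed.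

Lemma rsum_scal a b c f : rsum a b (fun i => c * f i) = c * rsum a b f.
Proof. unfold rsum. generalize (seq a (S b - a)). intros l; induction l; simpl; [ring| rewrite IHl; ring]. Qed.

Lemma rsum_mul a b c d f g :
  rsum a b f * rsum c d g = rsum a b (fun k => rsum c d (fun j => f k * g j)).
Proof.
  rewrite Rmult_comm. rewrite <- (rsum_scal a b (rsum c d g) f). apply rsum_ext. intros i _.
  rewrite Rmult_comm, <- rsum_scal. apply rsum_ext. intros; ring.
Qed.

Lemma rsum0_sum n f : rsum 0 n f = sum_f_R0 f n.
Proof.
  induction n. unfold rsum; simpl; ring.
  rewrite rsum_Sr by lia. simpl. rewrite IHn. reflexivity.
Qed.

Lemma rsum_shift a N f : rsum a (a + N) f = rsum 0 N (fun i => f (a + i)%nat).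
Proof.
  revert f; induction a; intros f; simpl. reflexivity.
  rewrite rsum_SS. rewrite IHa. reflexivity.
Qed.

Lemma rsum_opp a b f : rsum a b (fun i => - f i) = - rsum a b f.
Proof. rewrite <- (Rmult_1_l (rsum a b f)), Ropp_mult_distr_l, <- rsum_scal. apply rsum_ext; intros; ring. Qed.

Definition qn (q : R) (i : nat) := qnum q (INR i).

Lemma qn_pow q i : 0 < q -> qn q i = (1 - q ^ i) / (1 - q).
Proof. intros. unfold qn, qnum. now rewrite Rpower_pow. Qed.

Lemma qn_0 q : 0 < q -> qn q 0 = 0.
Proof. intros. rewrite qn_pow by auto. simpl. unfold Rdiv. ring. Qed.

Lemma qn_pos q k : 0 < q -> q < 1 -> 0 < qn q (S k).
Proof.
  intros. rewrite qn_pow by auto.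
  destruct (pow_lt_1_compat q (S k)) as [_ H2]; [lra|lia|].
  apply Rdiv_lt_0_compat; lra.
Qed.

Lemma qn_add q a b : 0 < q -> q < 1 -> qn q (a + b) = qn q a + q ^ a * qn q b.
Proof. intros. rewrite !qn_pow by auto. rewrite pow_add. field. lra. Qed.

Lemma qfact_S q k : qfact q (S k) = qfact q k * qn q (S k).
Proof.
  unfold qfact, rprod. replace (S (S k) - 1)%nat with (S (S k - 1)) by lia.
  rewrite seq_S. replace (1 + (S k - 1))%nat with (S k) by lia.
  rewrite fold_right_app. cbn [fold_right]. rewrite fr_prod_c. unfold qn. ring.
Qed.

Lemma qfact_pos q k : 0 < q -> q < 1 -> 0 < qfact q k.
Proof.
  intros. induction k. unfold qfact, rprod; simpl; lra.
  rewrite qfact_S. apply Rmult_lt_0_compat; auto. apply qn_pos; auto.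
Qed.

Lemma bin2_S i : bin2 (S i) = (bin2 i + i)%nat.
Proof.
  unfold bin2. replace (S i * (S i - 1))%nat with (i * (i - 1) + i * 2)%nat.
  - apply Nat.div_add; lia.
  - destruct i; [reflexivity|]. replace (S i - 1)%nat with i by lia.
    replace (S (S i) - 1)%nat with (S i) by lia. nia.
Qed.

Definition cc (q : R) (i : nat) := (-1) ^ i * q ^ (bin2 i).

Lemma cc_S q i : cc q (S i) = - q ^ i * cc q i.
Proof. unfold cc. rewrite bin2_S, pow_add. simpl. ring. Qed.

Definition TT (q : R) (n k : nat) :=
  rsum 0 k (fun i => (-1) ^ i * q ^ (bin2 i) * qbin q k i * (qnum q (INR (k - i))) ^ n).

Lemma qbin_S q k i : 0 < q -> q < 1 -> (i <= k)%nat ->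
  qbin q (S k) (S i) * qn q (S i) = qn q (S k) * qbin q k i.
Proof.
  intros. unfold qbin. replace (S k - S i)%nat with (k - i)%nat by lia.
  rewrite !qfact_S.
  assert (0 < qfact q k) by (apply qfact_pos; auto).
  assert (0 < qfact q i) by (apply qfact_pos; auto).
  assert (0 < qfact q (k - i)) by (apply qfact_pos; auto).
  assert (0 < qn q (S i)) by (apply qn_pos; auto).
  field. repeat split; lra.
Qed.

Lemma TT_rec q l k : 0 < q -> q < 1 ->
  TT q (S l) (S k) = qn q (S k) * (TT q l (S k) + q ^ k * TT q l k).
Proof.
  intros. unfold TT.
  transitivity (rsum 0 (S k) (fun i => qn q (S k) *
     ((-1) ^ i * q ^ bin2 i * qbin q (S k) i * qnum q (INR (S k - i)) ^ l))
    + - rsum 0 (S k) (fun i => cc q i * qbin q (S k) i * qn q (S k - i) ^ l * q ^ (S k - i) * qn q i)).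
  { rewrite <- rsum_opp. rewrite <- rsum_plus. apply rsum_ext. intros i Hi.
    assert (E : qn q (S k) = qn q (S k - i) + q ^ (S k - i) * qn q i).
    { rewrite <- qn_add by auto. f_equal. lia. }
    change (qnum q (INR (S k - i)) ^ S l) with (qnum q (INR (S k - i)) * qnum q (INR (S k - i)) ^ l). fold (qn q (S k - i)). rewrite E. unfold cc. ring. }
  rewrite rsum_scal. rewrite (rsum_0S k (fun i => cc q i * qbin q (S k) i * qn q (S k - i) ^ l * q ^ (S k - i) * qn q i)).
  rewrite qn_0 by auto. rewrite Rmult_0_r, Rplus_0_l.
  rewrite Rmult_plus_distr_l. f_equal.
  rewrite <- rsum_opp, <- !rsum_scal.
  apply rsum_ext. intros i Hi. simpl (S k - S i)%nat.
  rewrite cc_S.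
  replace (- (- q ^ i * cc q i * qbin q (S k) (S i) * qn q (k - i) ^ l * q ^ (k - i) * qn q (S i)))
    with (q ^ i * q ^ (k - i) * (cc q i * (qbin q (S k) (S i) * qn q (S i)) * qn q (k - i) ^ l)) by ring.
  rewrite qbin_S by (auto; lia). rewrite <- pow_add. replace (i + (k - i))%nat with k by lia.
  unfold cc, qn. ring.
Qed.

Definition qb' q k i := if Nat.leb i k then qbin q k i else 0.

Lemma qfact_0 q : qfact q 0 = 1.
Proof. reflexivity. Qed.

Lemma qbin_0 q k : 0 < q -> q < 1 -> qbin q k 0 = 1.
Proof. intros. unfold qbin. rewrite qfact_0, Nat.sub_0_r.
  assert (0 < qfact q k) by (apply qfact_pos; auto). field. lra. Qed.

Lemma qbin_kk q k : 0 < q -> q < 1 -> qbin q k k = 1.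
Proof. intros. unfold qbin. rewrite Nat.sub_diag, qfact_0.
  assert (0 < qfact q k) by (apply qfact_pos; auto). field. lra. Qed.

Lemma pascal q k i : 0 < q -> q < 1 -> (i <= k)%nat ->
  qb' q (S k) (S i) = qb' q k i + q ^ (S i) * qb' q k (S i).
Proof.
  intros. unfold qb'.
  replace (Nat.leb (S i) (S k)) with true by (symmetry; apply Nat.leb_le; lia).
  replace (Nat.leb i k) with true by (symmetry; apply Nat.leb_le; lia).
  destruct (Nat.eq_dec i k) as [->|Hne].
  - replace (Nat.leb (S k) k) with false by (symmetry; apply Nat.leb_gt; lia).
    rewrite !qbin_kk by auto. ring.
  - replace (Nat.leb (S i) k) with true by (symmetry; apply Nat.leb_le; lia).
    destruct (Nat.le_exists_sub (S i) k) as [m [Hm _]]; [lia|]. subst k.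
    unfold qbin. replace (S (m + S i) - S i)%nat with (S m) by lia.
    replace (m + S i - i)%nat with (S m) by lia. replace (m + S i - S i)%nat with m by lia.
    rewrite !qfact_S.
    replace (S (m + S i)) with (S i + S m)%nat by lia. rewrite qn_add by auto.
    replace (m + S i)%nat with (i + S m)%nat by lia.
    assert (0 < qfact q (i + S m)) by (apply qfact_pos; auto).
    assert (0 < qfact q i) by (apply qfact_pos; auto).
    assert (0 < qfact q m) by (apply qfact_pos; auto).
    assert (0 < qn q (S i)) by (apply qn_pos; auto).
    assert (0 < qn q (S m)) by (apply qn_pos; auto).
    field. repeat split; lra.
Qed.

Definition AA q k t := rsum 0 k (fun i => cc q i * qb' q k i * t ^ i).

Lemma AA_rec q k t : 0 < q -> q < 1 -> AA q (S k) t = (1 - t) * AA q k (q * t).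
Proof.
  intros. unfold AA. rewrite rsum_0S.
  rewrite (rsum_ext 0 k _ (fun i => (- t) * (cc q i * qb' q k i * (q * t) ^ i)
     + cc q (S i) * qb' q k (S i) * (q * t) ^ (S i))).
  2:{ intros i Hi. rewrite pascal by (auto; lia). rewrite cc_S, Rpow_mult_distr. simpl. rewrite !Rpow_mult_distr. ring. }
  rewrite rsum_plus, rsum_scal.
  set (g := fun i => cc q i * qb' q k i * (q * t) ^ i).
  change (rsum 0 k (fun i => cc q (S i) * qb' q k (S i) * (q * t) ^ S i)) with (rsum 0 k (fun i => g (S i))).
  assert (E : rsum 0 (S k) g = rsum 0 k g + g (S k)) by (apply rsum_Sr; lia).
  rewrite rsum_0S in E.
  assert (g (S k) = 0). { unfold g, qb'. replace (Nat.leb (S k) k) with false by (symmetry; apply Nat.leb_gt; lia). ring. }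
  assert (g 0%nat = 1). { unfold g, qb'. simpl. rewrite qbin_0 by auto. unfold cc, bin2. simpl. ring. }
  assert (cc q 0 * qb' q (S k) 0 * t ^ 0 = 1). { unfold qb'. simpl. rewrite qbin_0 by auto. unfold cc, bin2. simpl. ring. }
  fold g. lra.
Qed.

Lemma TT0 q k : 0 < q -> q < 1 -> TT q 0 (S k) = 0.
Proof.
  intros. transitivity (AA q (S k) 1).
  - unfold TT, AA. apply rsum_ext. intros i Hi. unfold qb'.
    replace (Nat.leb i (S k)) with true by (symmetry; apply Nat.leb_le; lia).
    rewrite pow1. unfold cc. simpl. ring.
  - rewrite AA_rec by auto. ring.
Qed.

Lemma TT_van q l k : 0 < q -> q < 1 -> (l < k)%nat -> TT q l k = 0.
Proof.
  intros Hq0 Hq1. revert k. induction l; intros k Hk.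
  - destruct k; [lia|]. apply TT0; auto.
  - destruct k; [lia|]. rewrite TT_rec by auto. rewrite !IHl by lia. ring.
Qed.

Definition FF q x k := fold_right (fun i acc => qnum q (x - INR i) * acc) 1 (List.seq 0 k).

Lemma FF_S q x k : FF q x (S k) = FF q x k * qnum q (x - INR k).
Proof. unfold FF. rewrite seq_S, fold_right_app. cbn [fold_right]. rewrite fr_prod_c. simpl. ring. Qed.

Lemma G_rec q x k : 0 < q -> q < 1 ->
  qnum q x * qbinR q x k = qn q k * qbinR q x k + q ^ k * qn q (S k) * qbinR q x (S k).
Proof.
  intros. unfold qbinR. fold (FF q x k). fold (FF q x (S k)).
  rewrite FF_S, qfact_S.
  assert (0 < qfact q k) by (apply qfact_pos; auto).
  assert (0 < qn q (S k)) by (apply qn_pos; auto).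
  assert (E : qnum q x = qn q k + q ^ k * qnum q (x - INR k)).
  { rewrite qn_pow by auto. unfold qnum. rewrite <- (Rpower_pow k q) by auto.
    replace x with (INR k + (x - INR k)) at 1 by ring. rewrite Rpower_plus. field. lra. }
  rewrite E. field. lra.
Qed.

Lemma key q x l : 0 < q -> q < 1 ->
  rsum 0 l (fun k => TT q l k * qbinR q x k) = qnum q x ^ l.
Proof.
  intros Hq0 Hq1. induction l.
  - unfold rsum. simpl. unfold TT, rsum, qbinR. simpl. rewrite qbin_0 by auto.
    unfold bin2. simpl. rewrite qfact_0. field.
  - rewrite rsum_0S. rewrite (rsum_ext 0 l _ (fun k => qn q (S k) * TT q l (S k) * qbinR q x (S k)
       + TT q l k * (q ^ k * qn q (S k) * qbinR q x (S k)))).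
    2:{ intros i _. rewrite TT_rec by auto. ring. }
    rewrite rsum_plus.
    simpl (qnum q x ^ S l). rewrite <- IHl, <- rsum_scal.
    rewrite (rsum_ext 0 l (fun i => qnum q x * (TT q l i * qbinR q x i))
       (fun i => qn q i * TT q l i * qbinR q x i + TT q l i * (q ^ i * qn q (S i) * qbinR q x (S i)))).
    2:{ intros i _. replace (qnum q x * (TT q l i * qbinR q x i)) with (TT q l i * (qnum q x * qbinR q x i)) by ring.
        rewrite G_rec by auto. ring. }
    rewrite rsum_plus.
    set (h := fun k => qn q k * TT q l k * qbinR q x k).
    assert (E1 : rsum 0 (S l) h = rsum 0 l h + h (S l)) by (apply rsum_Sr; lia).
    rewrite rsum_0S in E1.
    assert (h (S l) = 0) by (unfold h; rewrite TT_van by (auto; lia); ring).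
    assert (h 0%nat = 0) by (unfold h; rewrite qn_0 by auto; ring).
    assert (T0 : TT q (S l) 0 = 0).
    { unfold TT, rsum. simpl. replace (qnum q 0) with 0 by (unfold qnum; rewrite Rpower_O by auto; field; lra). ring. }
    rewrite T0. change (rsum 0 l (fun k => qn q (S k) * TT q l (S k) * qbinR q x (S k))) with (rsum 0 l (fun k => h (S k))).
    fold h. lra.
Qed.

Lemma C_pos n k : 0 < C n k.
Proof.
  unfold C. apply Rdiv_lt_0_compat. apply INR_fact_lt_0.
  apply Rmult_lt_0_compat; apply INR_fact_lt_0.
Qed.

Lemma xpart l n a b : (l <= n)%nat ->
  rsum l n (fun k => C k l / C n l * (C n k * a ^ k * b ^ (n - k))) = a ^ l * (a + b) ^ (n - l).
Proof.
  intros H. remember (n - l)%nat as N. assert (n = l + N)%nat by lia. subst n.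
  rewrite rsum_shift, binomial, <- rsum0_sum, <- rsum_scal.
  apply rsum_ext. intros i Hi.
  replace (l + N - (l + i))%nat with (N - i)%nat by lia. rewrite pow_add.
  unfold C. replace (l + i - l)%nat with i by lia. replace (l + N - l)%nat with N by lia.
  replace (l + N - (l + i))%nat with (N - i)%nat by lia.
  pose proof (INR_fact_neq_0 l). pose proof (INR_fact_neq_0 i). pose proof (INR_fact_neq_0 N).
  pose proof (INR_fact_neq_0 (N - i)). pose proof (INR_fact_neq_0 (l + i)). pose proof (INR_fact_neq_0 (l + N)).
  field. repeat split; auto.
Qed.

Lemma sum_nz q x : 0 < q -> q < 1 -> 0 <= x -> x <= 1 -> qnum q x + qnum q (1 - x) <> 0.
Proof.
  intros. unfold qnum.
  assert (Hu : forall z, 0 <= z -> Rpower q z <= 1).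
  { intros z Hz. unfold Rpower. rewrite <- exp_0. destruct (Rle_lt_or_eq_dec 0 z Hz) as [Hlt| <-].
    - left. apply exp_increasing. assert (ln q < 0) by (rewrite <- ln_1; apply ln_increasing; lra). nra.
    - right. f_equal. ring. }
  pose proof (Hu x ltac:(lra)). pose proof (Hu (1 - x) ltac:(lra)).
  assert (Rpower q x * Rpower q (1 - x) = q).
  { rewrite <- Rpower_plus. replace (x + (1 - x)) with 1 by ring. apply Rpower_1; auto. }
  assert (0 < Rpower q x) by (unfold Rpower; apply exp_pos).
  assert (0 < Rpower q (1 - x)) by (unfold Rpower; apply exp_pos).
  intro Hc. assert (Hc2 : (1 - Rpower q x + (1 - Rpower q (1 - x))) = 0).
  { replace (1 - Rpower q x + (1 - Rpower q (1 - x))) with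
      (((1 - Rpower q x) / (1 - q) + (1 - Rpower q (1 - x)) / (1 - q)) * (1 - q)) by (field; lra).
    rewrite Hc. ring. }
  nra.
Qed.

Lemma rhs_part q x l : 0 < q -> q < 1 ->
  rsum 0 l (fun k => q ^ bin2 k * qbinR q x k * qfact q k * qstir q l k) = qnum q x ^ l.
Proof.
  intros. rewrite <- (key q x l) by auto. apply rsum_ext. intros k _.
  unfold qstir. fold (TT q l k).
  assert (0 < qfact q k) by (apply qfact_pos; auto).
  assert (q ^ bin2 k <> 0) by (apply pow_nonzero; lra).
  field. split; lra.
Qed.

Theorem theorem11 (q : R) (hq0 : 0 < q) (hq1 : q < 1)
  (n m l : nat) (hln : (l <= n)%nat) (hlm : (l <= m)%nat)
  (x y : R) (hx0 : 0 <= x) (hx1 : x <= 1) (hy0 : 0 <= y) (hy1 : y <= 1) :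
  / ((qnum q x + qnum q (1 - x)) ^ (n - l) * (qnum q y + qnum q (1 - y)) ^ (m - l))
  * rsum l n (fun k => rsum l m (fun j =>
      C k l * C j l / (C n l * C m l) * qBern q k j n m x y))
  = rsum 0 l (fun k => rsum 0 l (fun j =>
      q ^ (bin2 k + bin2 j) * qbinR q x k * qbinR q y j
      * qfact q k * qfact q j * qstir q l k * qstir q l j)).
Proof.
  rewrite (rsum_ext 0 l _ (fun k => rsum 0 l (fun j =>
      (q ^ bin2 k * qbinR q x k * qfact q k * qstir q l k) *
      (q ^ bin2 j * qbinR q y j * qfact q j * qstir q l j)))).
  2:{ intros k _. apply rsum_ext. intros j _. rewrite pow_add. ring. }
  rewrite <- rsum_mul, !rhs_part by auto.
  set (a := qnum q x). set (b := qnum q (1 - x)). set (c := qnum q y). set (d := qnum q (1 - y)).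
  rewrite (rsum_ext l n _ (fun k => rsum l m (fun j =>
      (C k l / C n l * (C n k * a ^ k * b ^ (n - k))) * (C j l / C m l * (C m j * c ^ j * d ^ (m - j)))))).
  2:{ intros k Hk. apply rsum_ext. intros j Hj. unfold qBern.
      replace (Nat.leb k n) with true by (symmetry; apply Nat.leb_le; lia).
      replace (Nat.leb j m) with true by (symmetry; apply Nat.leb_le; lia). simpl.
      pose proof (C_pos n l). pose proof (C_pos m l). unfold a, b, c, d. field. split; lra. }
  rewrite <- rsum_mul, !xpart by auto.
  assert ((a + b) ^ (n - l) <> 0) by (apply pow_nonzero, sum_nz; auto).
  assert ((c + d) ^ (m - l) <> 0) by (apply pow_nonzero, sum_nz; auto).
  field. split; auto.
Qed.
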